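(* Let $|a|>2$ and let $\langle z_0\rangle$ be a bitransitive attracting cycle of $B_a(z)=z^3\frac{z-a}{1-\bar a z}$, i.e. an attracting cycle whose immediate basin contains both free critical points $c_+$ and $c_-$ in different connected components. Then the multiplier of $\langle z_0\rangle$ is a non-negative real number.
   Context: For $|a|>2$ the free critical points of $B_a$ are $c_\pm=\frac{a}{3|a|^2}\left(2+|a|^2\pm\sqrt{(|a|^2-4)(|a|^2-1)}\right)$, which are mirror images of each other under $z\mapsto1/\bar z$. *)

(* Defs.v *)
From Stdlib Require Import Reals Lra.
Open Scope R_scope.

Definition Cx : Type := (R * R)%type.
Definition Cre (z : Cx) : R := fst z.
Definition Cim (z : Cx) : R := snd z.
Definition Cadd (z w : Cx) : Cx := (fst z + fst w, snd z + snd w).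
Definition Copp (z : Cx) : Cx := (- fst z, - snd z).
Definition Csub (z w : Cx) : Cx := Cadd z (Copp w).
Definition Cmul (z w : Cx) : Cx :=
  (fst z * fst w - snd z * snd w, fst z * snd w + snd z * fst w).
Definition Cconj (z : Cx) : Cx := (fst z, - snd z).
Definition Cnorm2 (z : Cx) : R := fst z * fst z + snd z * snd z.
Definition Cnorm (z : Cx) : R := sqrt (Cnorm2 z).
(* total inverse; the value at 0 is junk and never used at 0 below *)
Definition Cinv (z : Cx) : Cx := (fst z / Cnorm2 z, - snd z / Cnorm2 z).
Definition Cdiv (z w : Cx) : Cx := Cmul z (Cinv w).
Definition Cscal (r : R) (z : Cx) : Cx := (r * fst z, r * snd z).
Definition Cone : Cx := (1, 0).

Definition denB (a z : Cx) : Cx := Csub Cone (Cmul (Cconj a) z).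
Definition B (a z : Cx) : Cx :=
  Cdiv (Cmul (Cmul z (Cmul z z)) (Csub z a)) (denB a z).

(* B_a on the Riemann sphere C ∪ {∞}, with ∞ encoded as None:
   the pole 1/conj(a) is sent to ∞ and ∞ is fixed. *)
Definition Bhat (a : Cx) (z : option Cx) : option Cx :=
  match z with
  | None => None
  | Some w => if Req_EM_T (Cnorm2 (denB a w)) 0 then None else Some (B a w)
  end.

Definition orbit (a : Cx) (n : nat) (z : Cx) : option Cx := Nat.iter n (Bhat a) (Some z).

Definition exact_period (a z0 : Cx) (p : nat) : Prop :=
  (0 < p)%nat /\ orbit a p z0 = Some z0 /\
  forall k, (0 < k < p)%nat -> orbit a k z0 <> Some z0.

Definition in_cycle (a z0 : Cx) (p : nat) (w : Cx) : Prop :=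
  exists k, (k < p)%nat /\ orbit a k z0 = Some w.

Definition has_cderiv (f : Cx -> Cx) (z0 L : Cx) : Prop :=
  forall eps, 0 < eps -> exists delta, 0 < delta /\
    forall z, 0 < Cnorm (Csub z z0) < delta ->
      Cnorm (Csub (Csub (f z) (f z0)) (Cmul L (Csub z z0))) <= eps * Cnorm (Csub z z0).

Definition multiplier (a z0 : Cx) (p : nat) (lam : Cx) : Prop :=
  has_cderiv (Nat.iter p (B a)) z0 lam.

Definition basin (a z0 : Cx) (p : nat) (z : Cx) : Prop :=
  (forall n, orbit a n z <> None) /\
  forall eps, 0 < eps -> exists N, forall n w, (N <= n)%nat -> orbit a n z = Some w ->
    exists v, in_cycle a z0 p v /\ Cnorm (Csub w v) < eps.

Definition Copen (U : Cx -> Prop) : Prop :=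
  forall z, U z -> exists r, 0 < r /\ forall w, Cnorm (Csub w z) < r -> U w.

Definition Cconnected (T : Cx -> Prop) : Prop :=
  ~ exists U V : Cx -> Prop, Copen U /\ Copen V /\
      (forall z, T z -> U z \/ V z) /\
      (exists z, T z /\ U z) /\ (exists z, T z /\ V z) /\
      (forall z, T z -> U z -> V z -> False).

Definition same_component (S : Cx -> Prop) (z w : Cx) : Prop :=
  exists T : Cx -> Prop, (forall x, T x -> S x) /\ Cconnected T /\ T z /\ T w.

Definition immediate_basin (a z0 : Cx) (p : nat) (z : Cx) : Prop :=
  exists v, in_cycle a z0 p v /\ same_component (basin a z0 p) v z.

Definition c_plus (a : Cx) : Cx :=
  Cscal ((2 + Cnorm2 a + sqrt ((Cnorm2 a - 4) * (Cnorm2 a - 1))) / (3 * Cnorm2 a)) a.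
Definition c_minus (a : Cx) : Cx :=
  Cscal ((2 + Cnorm2 a - sqrt ((Cnorm2 a - 4) * (Cnorm2 a - 1))) / (3 * Cnorm2 a)) a.

Definition bitransitive_attracting (a z0 : Cx) (p : nat) (lam : Cx) : Prop :=
  exact_period a z0 p /\ multiplier a z0 p lam /\ Cnorm lam < 1 /\
  immediate_basin a z0 p (c_plus a) /\ immediate_basin a z0 p (c_minus a) /\
  ~ same_component (basin a z0 p) (c_plus a) (c_minus a).

(* Main.v *)
Require Import Defs.
From Stdlib Require Import Reals Lra Lia Classical.
From Coquelicot Require Import Complex.
Open Scope R_scope.

Lemma Cinv_eq z : Defs.Cinv z = Cinv z.
Proof. destruct z as [x y]; unfold Defs.Cinv, Cinv, Cnorm2; simpl; now rewrite !Rmult_1_r. Qed.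
Lemma Cnorm_eq z : Cnorm z = Cmod z.
Proof. destruct z as [x y]; unfold Cnorm, Cmod, Cnorm2; simpl; now rewrite !Rmult_1_r. Qed.
Lemma Cnorm2_eq z : Cnorm2 z = Cmod z ^ 2.
Proof. destruct z as [x y]; unfold Cmod, Cnorm2; simpl. rewrite !Rmult_1_r, sqrt_sqrt; nra. Qed.
Lemma Cnorm2_0 (z : C) : Cnorm2 z = 0 <-> z = 0%C.
Proof. rewrite Cnorm2_eq; split; intro H.
 - apply Cmod_eq_0. nra.
 - subst. rewrite Cmod_0. ring. Qed.
Lemma B_eq (a z : C) : B a z = ((z*(z*z))*(z-a) / (1 - Cconj a * z))%C.
Proof. unfold B, Defs.Cdiv, denB. rewrite Cinv_eq. reflexivity. Qed.
Lemma Bhat_eq a w : Bhat a (Some w) = if Req_EM_T (Cnorm2 (denB a w)) 0 then None else Some (B a w).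
Proof. reflexivity. Qed.
Lemma denB_eq (a w : C) : denB a w = (1 - Cconj a * w)%C.
Proof. reflexivity. Qed.

Definition cont (f : C -> C) (z : C) := forall eps, 0 < eps -> exists d, 0 < d /\
  forall w, Cmod (w - z) < d -> Cmod (f w - f z) < eps.

Lemma Cmod_sub_sym (x y : C) : Cmod (x - y) = Cmod (y - x).
Proof. replace (x - y)%C with (- (y - x))%C by ring. apply Cmod_opp. Qed.

Lemma Cmod_tri3 (x y : C) : Cmod (x + y) <= Cmod x + Cmod y.
Proof. apply Cmod_triangle. Qed.

Lemma cont_const c z : cont (fun _ => c) z.
Proof. intros eps He. exists 1; split; [lra|]. intros w _.
 replace (c - c)%C with (RtoC 0) by ring. rewrite Cmod_0; lra. Qed.

Lemma cont_id z : cont (fun w => w) z.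
Proof. intros eps He. exists eps; split; auto. Qed.

Lemma cont_add f g z : cont f z -> cont g z -> cont (fun w => f w + g w)%C z.
Proof. intros Hf Hg eps He.
 destruct (Hf (eps/2)) as [d1 [Hd1 H1]]; [lra|].
 destruct (Hg (eps/2)) as [d2 [Hd2 H2]]; [lra|].
 exists (Rmin d1 d2); split; [apply Rmin_pos; auto|]. intros w Hw.
 replace (f w + g w - (f z + g z))%C with ((f w - f z) + (g w - g z))%C by ring.
 eapply Rle_lt_trans; [apply Cmod_triangle|].
 assert (Cmod (f w - f z) < eps/2) by (apply H1; eapply Rlt_le_trans; [exact Hw| apply Rmin_l]).
 assert (Cmod (g w - g z) < eps/2) by (apply H2; eapply Rlt_le_trans; [exact Hw| apply Rmin_r]).
 lra. Qed.

Lemma cont_mul f g z : cont f z -> cont g z -> cont (fun w => f w * g w)%C z.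
Proof. intros Hf Hg eps He.
 set (A := Cmod (f z)). set (Bm := Cmod (g z)).
 assert (HA : 0 <= A) by apply Cmod_ge_0. assert (HB : 0 <= Bm) by apply Cmod_ge_0.
 destruct (Hf (eps/(2*(Bm+1)))) as [d1 [Hd1 H1]].
 { apply Rdiv_lt_0_compat; lra. }
 destruct (Hg (Rmin 1 (eps/(2*(A+1))))) as [d2 [Hd2 H2]].
 { apply Rmin_pos; [lra|apply Rdiv_lt_0_compat; lra]. }
 exists (Rmin d1 d2); split; [apply Rmin_pos; auto|]. intros w Hw.
 assert (E1 : Cmod (f w - f z) < eps/(2*(Bm+1))) by (apply H1; eapply Rlt_le_trans; [exact Hw| apply Rmin_l]).
 assert (E2 : Cmod (g w - g z) < Rmin 1 (eps/(2*(A+1)))) by (apply H2; eapply Rlt_le_trans; [exact Hw| apply Rmin_r]).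
 assert (E3 : Cmod (g w - g z) < 1) by (eapply Rlt_le_trans; [exact E2|apply Rmin_l]).
 assert (E4 : Cmod (g w - g z) < eps/(2*(A+1))) by (eapply Rlt_le_trans; [exact E2|apply Rmin_r]).
 assert (E5 : Cmod (g w) <= Bm + 1).
 { replace (g w) with ((g w - g z) + g z)%C by ring.
   eapply Rle_trans; [apply Cmod_triangle|]. unfold Bm; lra. }
 replace (f w * g w - f z * g z)%C with ((f w - f z) * g w + f z * (g w - g z))%C by ring.
 eapply Rle_lt_trans; [apply Cmod_triangle|]. rewrite !Cmod_mult.
 assert (Cmod (f w - f z) * Cmod (g w) <= eps/(2*(Bm+1)) * (Bm+1)).
 { apply Rmult_le_compat; try apply Cmod_ge_0; lra. }
 assert (Cmod (f z) * Cmod (g w - g z) <= A * (eps/(2*(A+1)))).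
 { apply Rmult_le_compat; try apply Cmod_ge_0; [apply Rle_refl | lra]. }
 assert (eps/(2*(Bm+1)) * (Bm+1) = eps/2) by (field; lra).
 assert (A * (eps/(2*(A+1))) < eps/2).
 { replace (A * (eps/(2*(A+1)))) with (eps/2 * (A/(A+1))) by (field; lra).
   assert (A/(A+1) = 1 - 1/(A+1)) by (field; lra).
   assert (0 < 1/(A+1)) by (apply Rdiv_lt_0_compat; lra). nra. }
 lra. Qed.

Lemma cont_comp f g z : cont f z -> cont g (f z) -> cont (fun w => g (f w)) z.
Proof. intros Hf Hg eps He. destruct (Hg eps He) as [d1 [Hd1 H1]].
 destruct (Hf d1 Hd1) as [d2 [Hd2 H2]]. exists d2; split; auto. Qed.

Lemma Cinv_diff (w z : C) : w <> 0%R -> z <> 0%R -> (/ w - / z = - (w - z) / (w * z))%C.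
Proof. intros. field. split; [exact H0|exact H]. Qed.

Lemma cont_inv (z : C) : z <> 0%R -> cont (fun w => / w)%C z.
Proof. intros Hz eps He. assert (Hm : 0 < Cmod z) by (apply Cmod_gt_0; exact Hz).
 exists (Rmin (Cmod z / 2) (eps * (Cmod z * Cmod z) / 2)); split.
 { apply Rmin_pos; [lra|]. apply Rdiv_lt_0_compat; [|lra]. apply Rmult_lt_0_compat; nra. }
 intros w Hw.
 assert (Hw1 : Cmod (w - z) < Cmod z / 2) by (eapply Rlt_le_trans; [exact Hw|apply Rmin_l]).
 assert (Hw2 : Cmod (w - z) < eps * (Cmod z * Cmod z) / 2) by (eapply Rlt_le_trans; [exact Hw|apply Rmin_r]).
 assert (Hwm : Cmod z / 2 < Cmod w).
 { assert (Cmod z <= Cmod w + Cmod (z - w)).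
   { replace z with (w + (z - w))%C at 1 by ring. apply Cmod_triangle. }
   rewrite Cmod_sub_sym in Hw1. lra. }
 assert (Hw0 : w <> 0%R). { intro E. subst. rewrite Cmod_0 in Hwm. lra. }
 rewrite Cinv_diff by auto. unfold Cdiv. rewrite Cmod_mult, Cmod_opp, Cmod_inv.
 2:{ apply Cmult_neq_0; auto. }
 rewrite Cmod_mult.
 apply Rmult_lt_reg_r with (Cmod w * Cmod z). { apply Cmod_gt_0 in Hw0. nra. }
 rewrite Rmult_assoc, Rinv_l. 2:{ apply Cmod_gt_0 in Hw0. nra. }
 rewrite Rmult_1_r.
 assert (0 < eps * Cmod z) by nra.
 assert (eps * Cmod z * (Cmod z / 2) < eps * Cmod z * Cmod w) by (apply Rmult_lt_compat_l; auto).
 nra.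
Qed.


Definition cara (f : C -> C) (z L : C) := exists (phi : C -> C) r, 0 < r /\ cont phi z /\ phi z = L /\
  forall w, Cmod (w - z) < r -> (f w - f z = phi w * (w - z))%C.

Definition hd (f : C -> C) (z L : C) := forall eps, 0 < eps -> exists delta, 0 < delta /\
  forall w, 0 < Cmod (w - z) < delta -> Cmod (f w - f z - L * (w - z)) <= eps * Cmod (w - z).

Lemma cara_cont f z L : cara f z L -> cont f z.
Proof. intros [phi [r [Hr [Hc [HL Hf]]]]] eps He.
 destruct (Hc 1) as [d [Hd Hd']]; [lra|].
 set (M := Cmod (phi z) + 1).
 assert (HM : 0 < M) by (unfold M; pose proof (Cmod_ge_0 (phi z)); lra).
 exists (Rmin r (Rmin d (eps / M))); split.
 { apply Rmin_pos; auto. apply Rmin_pos; auto. apply Rdiv_lt_0_compat; auto. }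
 intros w Hw.
 assert (H1 : Cmod (w - z) < r) by (eapply Rlt_le_trans; [exact Hw|apply Rmin_l]).
 assert (H2 : Cmod (w - z) < Rmin d (eps/M)) by (eapply Rlt_le_trans; [exact Hw|apply Rmin_r]).
 assert (H3 : Cmod (w - z) < d) by (eapply Rlt_le_trans; [exact H2|apply Rmin_l]).
 assert (H4 : Cmod (w - z) < eps/M) by (eapply Rlt_le_trans; [exact H2|apply Rmin_r]).
 rewrite Hf by auto. rewrite Cmod_mult.
 assert (Cmod (phi w) <= M).
 { specialize (Hd' w H3). replace (phi w) with ((phi w - phi z) + phi z)%C by ring.
   eapply Rle_trans; [apply Cmod_triangle|]. unfold M; lra. }
 assert (Cmod (phi w) * Cmod (w - z) <= M * (eps / M)).
 { apply Rmult_le_compat; try apply Cmod_ge_0; lra. }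
 assert (M * (eps/M) = eps) by (field; lra).
 destruct (Req_dec (Cmod (w - z)) 0) as [E|E].
 - rewrite E, Rmult_0_r; auto.
 - assert (0 < Cmod (w - z)) by (pose proof (Cmod_ge_0 (w - z)); lra).
   assert (Cmod (phi w) * Cmod (w - z) < M * (eps / M)).
   { apply Rle_lt_trans with (M * Cmod (w - z)). apply Rmult_le_compat_r; auto; apply Cmod_ge_0.
     apply Rmult_lt_compat_l; auto. }
   lra.
Qed.

Lemma cara_hd f z L : cara f z L -> hd f z L.
Proof. intros [phi [r [Hr [Hc [HL Hf]]]]] eps He.
 destruct (Hc eps He) as [d [Hd Hd']].
 exists (Rmin r d); split; [apply Rmin_pos; auto|]. intros w [Hw0 Hw].
 assert (H1 : Cmod (w - z) < r) by (eapply Rlt_le_trans; [exact Hw|apply Rmin_l]).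
 assert (H3 : Cmod (w - z) < d) by (eapply Rlt_le_trans; [exact Hw|apply Rmin_r]).
 rewrite Hf by auto. subst L.
 replace (phi w * (w - z) - phi z * (w - z))%C with ((phi w - phi z) * (w - z))%C by ring.
 rewrite Cmod_mult. apply Rmult_le_compat_r; [apply Cmod_ge_0|]. left; auto.
Qed.

Lemma hd_unique f z L1 L2 : hd f z L1 -> hd f z L2 -> L1 = L2.
Proof. intros H1 H2.
 destruct (Req_dec (Cmod (L1 - L2)) 0) as [E|E].
 { apply Cmod_eq_0 in E. replace L1 with ((L1 - L2) + L2)%C by ring. rewrite E. ring. }
 assert (HP : 0 < Cmod (L1 - L2)) by (pose proof (Cmod_ge_0 (L1 - L2)); lra).
 set (e := Cmod (L1 - L2) / 4).
 assert (He : 0 < e) by (unfold e; lra).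
 destruct (H1 e He) as [d1 [Hd1 K1]]. destruct (H2 e He) as [d2 [Hd2 K2]].
 set (t := Rmin d1 d2 / 2).
 assert (Ht : 0 < t) by (unfold t; pose proof (Rmin_pos _ _ Hd1 Hd2); lra).
 set (w := (z + RtoC t)%C).
 assert (Hwz : (w - z)%C = RtoC t) by (unfold w; ring).
 assert (Hm : Cmod (w - z) = t) by (rewrite Hwz, Cmod_R; apply Rabs_right; lra).
 assert (Htd : t < Rmin d1 d2) by (unfold t; pose proof (Rmin_pos _ _ Hd1 Hd2); lra).
 specialize (K1 w). specialize (K2 w). rewrite Hm in K1, K2.
 assert (A1 : Cmod (f w - f z - L1 * (w - z)) <= e * t).
 { apply K1; split; auto. eapply Rlt_le_trans; [exact Htd|apply Rmin_l]. }
 assert (A2 : Cmod (f w - f z - L2 * (w - z)) <= e * t).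
 { apply K2; split; auto. eapply Rlt_le_trans; [exact Htd|apply Rmin_r]. }
 assert (A3 : Cmod ((L1 - L2) * (w - z)) <= e * t + e * t).
 { replace ((L1 - L2) * (w - z))%C with ((f w - f z - L2 * (w - z)) - (f w - f z - L1 * (w - z)))%C by ring.
   unfold Cminus at 1. eapply Rle_trans; [apply Cmod_triangle|]. rewrite Cmod_opp. lra. }
 rewrite Cmod_mult, Hm in A3. unfold e in A3. nra.
Qed.

Lemma hd_local f g z L r : 0 < r -> (forall w, Cmod (w - z) < r -> f w = g w) -> hd f z L -> hd g z L.
Proof. intros Hr Hfg H eps He. destruct (H eps He) as [d [Hd K]].
 exists (Rmin d r); split; [apply Rmin_pos; auto|]. intros w [Hw0 Hw].
 assert (Cmod (w - z) < r) by (eapply Rlt_le_trans; [exact Hw|apply Rmin_r]).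
 assert (Cmod (w - z) < d) by (eapply Rlt_le_trans; [exact Hw|apply Rmin_l]).
 rewrite <- (Hfg w), <- (Hfg z); auto.
 { replace (z - z)%C with (RtoC 0) by ring. rewrite Cmod_0; auto. }
Qed.

Lemma cont_conj (z : C) : cont Cconj z.
Proof. intros eps He. exists eps; split; auto. intros w Hw.
 rewrite <- Cminus_conj, Cmod_conj. auto. Qed.

Lemma cont_ext f g z : (forall w, f w = g w) -> cont f z -> cont g z.
Proof. intros E H eps He. destruct (H eps He) as [d [Hd K]]. exists d; split; auto.
 intros w Hw. rewrite <- !E. auto. Qed.

Lemma cara_ext f g z L : (forall w, f w = g w) -> cara f z L -> cara g z L.
Proof. intros E [phi [r [Hr [Hc [HL Hf]]]]]. exists phi, r; repeat split; auto.
 intros w Hw. rewrite <- !E. auto. Qed.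

Lemma cara_const (c z : C) : cara (fun _ => c) z (RtoC 0).
Proof. exists (fun _ => RtoC 0), 1; repeat split; try lra.
 - apply cont_const.
 - intros w _. ring. Qed.

Lemma cara_id (z : C) : cara (fun w => w) z (RtoC 1).
Proof. exists (fun _ => RtoC 1), 1; repeat split; try lra.
 - apply cont_const.
 - intros w _. ring. Qed.

Lemma cara_add f g z L1 L2 : cara f z L1 -> cara g z L2 -> cara (fun w => f w + g w)%C z (L1 + L2)%C.
Proof. intros [p1 [r1 [Hr1 [Hc1 [HL1 Hf1]]]]] [p2 [r2 [Hr2 [Hc2 [HL2 Hf2]]]]].
 exists (fun w => p1 w + p2 w)%C, (Rmin r1 r2); repeat split.
 - apply Rmin_pos; auto.
 - apply cont_add; auto.
 - subst; auto.
 - intros w Hw.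
   assert (Cmod (w - z) < r1) by (eapply Rlt_le_trans; [exact Hw|apply Rmin_l]).
   assert (Cmod (w - z) < r2) by (eapply Rlt_le_trans; [exact Hw|apply Rmin_r]).
   replace (f w + g w - (f z + g z))%C with ((f w - f z) + (g w - g z))%C by ring.
   rewrite Hf1, Hf2 by auto. ring. Qed.

Lemma cara_sub f g z L1 L2 : cara f z L1 -> cara g z L2 -> cara (fun w => f w - g w)%C z (L1 - L2)%C.
Proof. intros [p1 [r1 [Hr1 [Hc1 [HL1 Hf1]]]]] [p2 [r2 [Hr2 [Hc2 [HL2 Hf2]]]]].
 exists (fun w => p1 w + (RtoC (-1)) * p2 w)%C, (Rmin r1 r2); repeat split.
 - apply Rmin_pos; auto.
 - apply cont_add; auto. apply cont_mul; auto. apply cont_const.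
 - subst. unfold Cminus. f_equal. destruct (p2 z) as [x y]. unfold Cmult, Copp, RtoC; simpl. f_equal; ring.
 - intros w Hw.
   assert (Cmod (w - z) < r1) by (eapply Rlt_le_trans; [exact Hw|apply Rmin_l]).
   assert (Cmod (w - z) < r2) by (eapply Rlt_le_trans; [exact Hw|apply Rmin_r]).
   replace (f w - g w - (f z - g z))%C with ((f w - f z) - (g w - g z))%C by ring.
   rewrite Hf1, Hf2 by auto. destruct (p1 w), (p2 w), w, z. unfold Cmult, Cminus, Cplus, Copp, RtoC; simpl. f_equal; ring. Qed.

Lemma cara_mul f g z L1 L2 : cara f z L1 -> cara g z L2 -> cara (fun w => f w * g w)%C z (L1 * g z + f z * L2)%C.
Proof. intros H1 H2. pose proof (cara_cont _ _ _ H2) as Cg.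
 destruct H1 as [p1 [r1 [Hr1 [Hc1 [HL1 Hf1]]]]]. destruct H2 as [p2 [r2 [Hr2 [Hc2 [HL2 Hf2]]]]].
 exists (fun w => p1 w * g w + f z * p2 w)%C, (Rmin r1 r2); repeat split.
 - apply Rmin_pos; auto.
 - apply cont_add; apply cont_mul; auto. apply cont_const.
 - subst; auto.
 - intros w Hw.
   assert (Cmod (w - z) < r1) by (eapply Rlt_le_trans; [exact Hw|apply Rmin_l]).
   assert (Cmod (w - z) < r2) by (eapply Rlt_le_trans; [exact Hw|apply Rmin_r]).
   replace (f w * g w - f z * g z)%C with ((f w - f z) * g w + f z * (g w - g z))%C by ring.
   rewrite Hf1, Hf2 by auto. ring. Qed.

Lemma cara_comp f g z L1 L2 : cara f z L1 -> cara g (f z) L2 -> cara (fun w => g (f w)) z (L2 * L1)%C.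
Proof. intros H1 H2. pose proof (cara_cont _ _ _ H1) as Cf.
 destruct H1 as [p1 [r1 [Hr1 [Hc1 [HL1 Hf1]]]]]. destruct H2 as [p2 [r2 [Hr2 [Hc2 [HL2 Hf2]]]]].
 destruct (Cf r2 Hr2) as [d [Hd Kd]].
 exists (fun w => p2 (f w) * p1 w)%C, (Rmin r1 d); repeat split.
 - apply Rmin_pos; auto.
 - apply cont_mul; auto. apply cont_comp; auto.
 - subst; auto.
 - intros w Hw.
   assert (Cmod (w - z) < r1) by (eapply Rlt_le_trans; [exact Hw|apply Rmin_l]).
   assert (Cmod (w - z) < d) by (eapply Rlt_le_trans; [exact Hw|apply Rmin_r]).
   rewrite Hf2 by auto. rewrite Hf1 by auto. ring. Qed.

Lemma cara_inv (z : C) : z <> 0%R -> cara (fun w => / w)%C z (- / (z * z))%C.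
Proof. intros Hz. assert (Hm : 0 < Cmod z) by (apply Cmod_gt_0; exact Hz).
 exists (fun w => RtoC (-1) * / z * / w)%C, (Cmod z); repeat split; auto.
 - apply cont_mul. apply cont_const. apply cont_inv; auto.
 - field. exact Hz.
 - intros w Hw. assert (Hw0 : w <> 0%R).
   { intro E; subst. replace (0 - z)%C with (- z)%C in Hw by ring. rewrite Cmod_opp in Hw. lra. }
   field. split; [exact Hw0|exact Hz]. Qed.

Lemma cara_conj f z L : cara f (Cconj z) L -> cara (fun u => Cconj (f (Cconj u))) z (Cconj L).
Proof. intros [p [r [Hr [Hc [HL Hf]]]]].
 exists (fun u => Cconj (p (Cconj u))), r; split; [auto|split;[|split]].
 - apply (cont_comp (fun u => p (Cconj u)) Cconj). apply (cont_comp Cconj p). apply cont_conj. auto. apply cont_conj.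
 - subst. reflexivity.
 - intros w Hw. rewrite <- Cminus_conj. rewrite Hf.
   + rewrite Cmult_conj, Cminus_conj, !Cconj_conj. auto.
   + rewrite <- (Cconj_conj z) at 1. rewrite <- Cminus_conj, Cmod_conj. rewrite Cconj_conj; auto. Qed.

Ltac ceq := match goal with |- @eq _ ?x ?y => change (@eq C x y) end.

Definition Dn (a w : C) : C := (1 - Cconj a * w)%C.
Definition tau (w : C) : C := (/ Cconj w)%C.
Definition good (a w : C) : Prop := w <> 0%R /\ w <> a /\ Dn a w <> 0%R.

Lemma conj_neq0 (x : C) : x <> 0%R -> Cconj x <> 0%R.
Proof. intros H E. apply H. rewrite <- (Cconj_conj x), E. unfold Cconj, RtoC; simpl. f_equal; ring. Qed.

Lemma Cconj_1 : Cconj (RtoC 1) = RtoC 1.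
Proof. unfold Cconj, RtoC; simpl. f_equal; ring. Qed.

Lemma cara_B (a z : C) : Dn a z <> 0%R -> exists L, cara (B a) z L.
Proof. intros Hz. eexists. eapply cara_ext. { intro w. symmetry. apply B_eq. }
 apply cara_mul.
 - apply cara_mul. apply cara_mul. apply cara_id. apply cara_mul; apply cara_id.
   apply cara_sub. apply cara_id. apply cara_const.
 - apply (cara_comp (fun w => 1 - Cconj a * w)%C (fun w => / w)%C).
   + apply cara_sub. apply cara_const. apply cara_mul. apply cara_const. apply cara_id.
   + apply cara_inv. exact Hz.
Qed.

Lemma cara_val f z L L' : cara f z L -> L = L' -> cara f z L'.
Proof. intros H E; subst; auto. Qed.

Lemma B0 (a : C) : B a (RtoC 0) = RtoC 0.
Proof. rewrite B_eq. ceq. unfold Cdiv. ring. Qed.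

Lemma Baa (a : C) : B a a = RtoC 0.
Proof. rewrite B_eq. ceq. unfold Cdiv. ring. Qed.

Lemma cara_B0 (a : C) : cara (B a) (RtoC 0) (RtoC 0).
Proof. eapply cara_val. eapply cara_ext. { intro w. symmetry. apply B_eq. }
 apply cara_mul.
 - apply cara_mul. apply cara_mul. apply cara_id. apply cara_mul; apply cara_id.
   apply cara_sub. apply cara_id. apply cara_const.
 - apply (cara_comp (fun w => 1 - Cconj a * w)%C (fun w => / w)%C).
   + apply cara_sub. apply cara_const. apply cara_mul. apply cara_const. apply cara_id.
   + apply cara_inv. replace (1 - Cconj a * 0)%C with (RtoC 1) by ring.
     intro E. injection E. lra.
 - ceq. cbv beta. ring.
Qed.

Lemma cara_iter (a : C) n z : (forall j, (j < n)%nat -> Dn a (Nat.iter j (B a) z) <> 0%R) ->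
  exists L, cara (Nat.iter n (B a)) z L.
Proof. induction n; intros H.
 - exists (RtoC 1). simpl. apply cara_id.
 - destruct IHn as [L HL]. { intros j Hj. apply H. lia. }
   destruct (cara_B a (Nat.iter n (B a) z)) as [L2 HL2]. { apply H. lia. }
   exists (L2 * L)%C. apply (cara_comp (Nat.iter n (B a)) (B a)); auto.
Qed.

Lemma div_neq0 (x y : C) : x <> 0%R -> y <> 0%R -> (x / y)%C <> 0%R.
Proof. intros Hx Hy E. apply Hx. replace x with ((x / y) * y)%C by (field; exact Hy). rewrite E. ceq. ring. Qed.

Lemma tau_B (a w : C) : good a w -> Dn a (tau w) <> 0%R /\ B a (tau w) = tau (B a w).
Proof. intros [H0 [Ha HD]]. unfold Dn, tau in *.
 assert (C0 : Cconj w <> 0%R) by (apply conj_neq0; auto).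
 assert (C1 : (Cconj w - Cconj a)%C <> 0%R).
 { rewrite <- Cminus_conj. apply conj_neq0. intro E. apply Ha.
   replace w with ((w - a) + a)%C by ring. rewrite E. ring. }
 assert (E2 : Cconj (1 - Cconj a * w)%C = (1 - a * Cconj w)%C).
 { rewrite Cminus_conj, Cmult_conj, Cconj_conj. f_equal. apply Cconj_1. }
 assert (C2 : (1 - a * Cconj w)%C <> 0%R).
 { rewrite <- E2. apply conj_neq0; auto. }
 assert (E1 : (1 - Cconj a * / Cconj w)%C = ((Cconj w - Cconj a) / Cconj w)%C) by (field; auto).
 split.
 - rewrite E1. apply div_neq0; auto.
 - rewrite !B_eq. ceq. rewrite Cdiv_conj by auto.
   rewrite E2, E1. rewrite !Cmult_conj, Cminus_conj.
   field. split; [exact C2|split; assumption].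
Qed.

Lemma Bhat_good (a w : C) : Dn a w <> 0%R -> Bhat a (Some w) = Some (B a w).
Proof. intros H. simpl. destruct (Req_EM_T (Cnorm2 (denB a w)) 0) as [E|E]; auto.
 exfalso. apply H. apply Cnorm2_0 in E. exact E. Qed.

Lemma Bhat_bad (a w : C) : Bhat a (Some w) <> None -> Dn a w <> 0%R.
Proof. intros H E. apply H. simpl. destruct (Req_EM_T (Cnorm2 (denB a w)) 0) as [E'|E']; auto.
 exfalso. apply E'. apply Cnorm2_0. exact E. Qed.

Lemma iter_None (a : C) m : Nat.iter m (Bhat a) None = None.
Proof. induction m; simpl; auto. rewrite IHm. reflexivity. Qed.

Lemma orbit_add (a : C) m n z : orbit a (m + n) z = Nat.iter m (Bhat a) (orbit a n z).
Proof. unfold orbit. apply Nat.iter_add. Qed.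

Lemma orbit_some (a : C) n z : orbit a n z <> None ->
  orbit a n z = Some (Nat.iter n (B a) z) /\ (forall j, (j < n)%nat -> Dn a (Nat.iter j (B a) z) <> 0%R).
Proof. induction n; intros H.
 - split; auto. intros; lia.
 - assert (Hn : orbit a n z <> None).
   { intro E. apply H. change (orbit a (S n) z) with (Bhat a (orbit a n z)). rewrite E. reflexivity. }
   destruct (IHn Hn) as [E1 E2].
   assert (HD : Dn a (Nat.iter n (B a) z) <> 0%R).
   { apply Bhat_bad. change (orbit a (S n) z) with (Bhat a (orbit a n z)) in H. rewrite E1 in H. exact H. }
   split.
   + change (orbit a (S n) z) with (Bhat a (orbit a n z)). rewrite E1, Bhat_good; auto.
   + intros j Hj. destruct (Nat.eq_dec j n) as [->|]; auto. apply E2. lia.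
Qed.

Lemma cyc_kp (a z0 : C) p : orbit a p z0 = Some z0 -> forall k, orbit a (k * p) z0 = Some z0.
Proof. intros H k. induction k; auto. simpl. rewrite orbit_add, IHk. exact H. Qed.

Lemma cyc_basic (a z0 : C) p : (0 < p)%nat -> orbit a p z0 = Some z0 ->
  forall n, orbit a n z0 = Some (Nat.iter n (B a) z0) /\ Dn a (Nat.iter n (B a) z0) <> 0%R.
Proof. intros Hp H n.
 assert (HS : orbit a (S n) z0 <> None).
 { intro E. pose proof (cyc_kp a z0 p H (S n)) as K.
   assert (S n <= S n * p)%nat by nia.
   replace (S n * p)%nat with ((S n * p - S n) + S n)%nat in K by lia.
   rewrite orbit_add, E, iter_None in K. discriminate. }
 destruct (orbit_some a (S n) z0 HS) as [E1 E2].
 split; [|apply E2; lia].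
 assert (Hn : orbit a n z0 <> None).
 { intro E. apply HS. change (orbit a (S n) z0) with (Bhat a (orbit a n z0)). rewrite E. reflexivity. }
 apply (orbit_some a n z0 Hn).
Qed.

Lemma iterB0 (a : C) n : Nat.iter n (B a) (RtoC 0) = RtoC 0.
Proof. induction n; auto. simpl. rewrite IHn. apply B0. Qed.

Lemma fin_pos (Q : nat -> R -> Prop) : (forall i m m', 0 < m' <= m -> Q i m -> Q i m') ->
  forall p, (forall i, (i < p)%nat -> exists m, 0 < m /\ Q i m) -> exists m, 0 < m /\ forall i, (i < p)%nat -> Q i m.
Proof. intros HQ p. induction p; intros H.
 - exists 1; split; [lra|]. intros; lia.
 - destruct IHp as [m1 [Hm1 K1]]. { intros i Hi. apply H. lia. }
   destruct (H p) as [m2 [Hm2 K2]]. lia.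
   exists (Rmin m1 m2). split. apply Rmin_pos; auto.
   intros i Hi. destruct (Nat.eq_dec i p) as [->|].
   + apply HQ with m2; auto. split. apply Rmin_pos; auto. apply Rmin_r.
   + apply HQ with m1. split. apply Rmin_pos; auto. apply Rmin_l. apply K1; lia.
Qed.

Definition nice (a z : C) := forall n, exists w : C, orbit a n z = Some w /\ w <> 0%R.

Lemma nice_good (a z : C) n (w : C) : nice a z -> orbit a n z = Some w -> good a w.
Proof. intros Hn E. destruct (Hn n) as [w' [E' Hw']]. rewrite E in E'. injection E' as <-.
 destruct (Hn (S n)) as [w2 [E2 Hw2]].
 change (orbit a (S n) z) with (Bhat a (orbit a n z)) in E2. rewrite E in E2.
 assert (HD : Dn a w <> 0%R). { apply Bhat_bad. rewrite E2. discriminate. }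
 rewrite Bhat_good in E2 by auto. injection E2 as E2.
 split; auto. split; auto. intro Ea. subst w. rewrite Baa in E2. apply Hw2. rewrite <- E2. reflexivity.
Qed.

Lemma orbit_tau (a z : C) : nice a z -> forall n (w : C), orbit a n z = Some w -> orbit a n (tau z) = Some (tau w).
Proof. intros Hn n. induction n; intros w E.
 - simpl in *. injection E as <-. reflexivity.
 - destruct (Hn n) as [w' [E' Hw']].
   pose proof (nice_good a z n w' Hn E') as G.
   destruct (tau_B a w' G) as [D1 D2].
   change (orbit a (S n) z) with (Bhat a (orbit a n z)) in E. rewrite E' in E.
   rewrite Bhat_good in E by (destruct G as [_ [_ G]]; auto). injection E as <-.
   change (orbit a (S n) (tau z)) with (Bhat a (orbit a n (tau z))). rewrite (IHn w' E').
   rewrite Bhat_good by auto. rewrite D2. reflexivity.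
Qed.

Lemma tau_tau (w : C) : w <> 0%R -> tau (tau w) = w.
Proof. intros H. unfold tau. rewrite Cinv_conj by (apply conj_neq0; auto). rewrite Cconj_conj.
 ceq. field. exact H. Qed.

Lemma tau_neq0 (w : C) : w <> 0%R -> tau w <> 0%R.
Proof. intros H E. apply H. rewrite <- (tau_tau w H), E. unfold tau.
 unfold Cconj, Cinv, RtoC; simpl. f_equal; unfold Rdiv; ring. Qed.

Lemma Cmod_tau (w : C) : w <> 0%R -> Cmod (tau w) = / Cmod w.
Proof. intros H. unfold tau. rewrite Cmod_inv by (apply conj_neq0; auto). rewrite Cmod_conj. auto. Qed.

Lemma tau_diff (v w : C) : v <> 0%R -> w <> 0%R -> Cmod (tau w - tau v) = Cmod (w - v) / (Cmod w * Cmod v).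
Proof. intros Hv Hw. unfold tau. rewrite Cinv_diff by (apply conj_neq0; auto).
 unfold Cdiv. rewrite Cmod_mult, Cmod_opp, Cmod_inv.
 - rewrite Cmod_mult, <- Cminus_conj, !Cmod_conj. reflexivity.
 - apply Cmult_neq_0; apply conj_neq0; auto. Qed.

Lemma tau_close (v w : C) m eps : 0 < m -> m <= Cmod v -> 0 < eps ->
  Cmod (w - v) < Rmin (m/2) (eps * (m*m)/2) -> Cmod (tau w - tau v) < eps.
Proof. intros Hm Hmv He Hw.
 assert (Hw1 : Cmod (w - v) < m / 2) by (eapply Rlt_le_trans; [exact Hw|apply Rmin_l]).
 assert (Hw2 : Cmod (w - v) < eps * (m * m) / 2) by (eapply Rlt_le_trans; [exact Hw|apply Rmin_r]).
 assert (Hwm : Cmod v / 2 < Cmod w).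
 { assert (Cmod v <= Cmod w + Cmod (v - w)).
   { replace v with (w + (v - w))%C at 1 by ring. apply Cmod_triangle. }
   rewrite Cmod_sub_sym in Hw1. lra. }
 assert (Hv0 : v <> 0%R). { intro E. subst. rewrite Cmod_0 in Hmv. lra. }
 assert (Hw0 : w <> 0%R). { intro E. subst. rewrite Cmod_0 in Hwm. lra. }
 rewrite tau_diff by auto.
 assert (0 < Cmod w * Cmod v) by nra.
 apply Rmult_lt_reg_r with (Cmod w * Cmod v); auto. unfold Rdiv. rewrite Rmult_assoc, Rinv_l by lra.
 rewrite Rmult_1_r.
 assert (eps * (m*m) / 2 <= eps * (Cmod v * Cmod v) / 2).
 { apply Rmult_le_compat_r. lra. apply Rmult_le_compat_l. lra. apply Rmult_le_compat; lra. }
 assert (eps * Cmod v * (Cmod v / 2) < eps * Cmod v * Cmod w) by (apply Rmult_lt_compat_l; nra).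
 nra.
Qed.

Lemma cont_tau (w : C) : w <> 0%R -> cont tau w.
Proof. intros H. unfold tau. apply (cont_comp Cconj (fun x => / x)%C). apply cont_conj.
 apply cont_inv. apply conj_neq0; auto. Qed.

Lemma in_cycle_Z (a z0 : C) p (v : C) : (0 < p)%nat -> orbit a p z0 = Some z0 ->
  in_cycle a z0 p v -> exists k, (k < p)%nat /\ v = Nat.iter k (B a) z0.
Proof. intros Hp H [k [Hk E]]. exists k; split; auto.
 destruct (cyc_basic a z0 p Hp H k) as [E' _]. rewrite E in E'. injection E'; auto. Qed.

Lemma basin_nice (a z0 : C) p z m : 0 < m -> (forall v, in_cycle a z0 p v -> m <= Cmod v) ->
  basin a z0 p z -> nice a z.
Proof. intros Hm Hcyc [Hnn Hconv] n.
 destruct (orbit a n z) as [w|] eqn:E; [|exfalso; apply (Hnn n); auto].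
 exists w; split; auto. intro W. subst w.
 assert (K : forall k, orbit a (k + n) z = Some (RtoC 0)).
 { induction k. simpl. auto. change (orbit a (S k + n) z) with (Bhat a (orbit a (k + n) z)).
   rewrite IHk, Bhat_good. rewrite B0; auto.
   unfold Dn. replace (1 - Cconj a * 0)%C with (RtoC 1) by (ceq; ring). intro E1. injection E1. lra. }
 destruct (Hconv m Hm) as [N HN].
 destruct (HN (N + n)%nat (RtoC 0)) as [v [Hv Hd]]. lia. apply K.
 specialize (Hcyc v Hv). rewrite Cnorm_eq in Hd. change (Csub (RtoC 0) v) with (RtoC 0 - v)%C in Hd.
 replace (RtoC 0 - v)%C with (- v)%C in Hd by ring. rewrite Cmod_opp in Hd. lra.
Qed.

Lemma tau_basin (a z0 : C) p z m : (0 < p)%nat -> orbit a p z0 = Some z0 ->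
  0 < m -> (forall v, in_cycle a z0 p v -> m <= Cmod v) -> nice a z0 ->
  basin a z0 p z -> basin a (tau z0) p (tau z).
Proof. intros Hp Hper Hm Hcyc Hn0 Hb.
 pose proof (basin_nice a z0 p z m Hm Hcyc Hb) as Hnz.
 destruct Hb as [Hnn Hconv]. split.
 - intros n E. destruct (Hnz n) as [w [Ew _]]. rewrite (orbit_tau a z Hnz n w Ew) in E. discriminate.
 - intros eps He.
   destruct (Hconv (Rmin (m/2) (eps * (m*m)/2))) as [N HN].
   { apply Rmin_pos. lra. apply Rdiv_lt_0_compat; [|lra]. apply Rmult_lt_0_compat; nra. }
   exists N. intros n w' Hn Ew'.
   destruct (Hnz n) as [w [Ew _]]. rewrite (orbit_tau a z Hnz n w Ew) in Ew'. injection Ew' as <-.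
   destruct (HN n w Hn Ew) as [v [Hv Hd]].
   exists (tau v). split.
   + destruct Hv as [k [Hk Ek]]. exists k. split; auto. apply orbit_tau; auto.
   + rewrite Cnorm_eq. apply tau_close with m; auto. rewrite Cnorm_eq in Hd. exact Hd.
Qed.

Lemma conn_side (T U V : C -> Prop) (x : C) : Cconnected T -> Copen U -> Copen V ->
  (forall z, T z -> U z \/ V z) -> (forall z, T z -> U z -> V z -> False) -> T x -> U x ->
  forall z, T z -> ~ V z.
Proof. intros HT oU oV cov dis Tx Ux z Tz Vz. apply HT. exists U, V.
 repeat split; auto. exists x; auto. exists z; auto. Qed.

Lemma conn_union (T1 T2 : C -> Prop) (x : C) : Cconnected T1 -> Cconnected T2 -> T1 x -> T2 x ->
  Cconnected (fun y => T1 y \/ T2 y).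
Proof. intros H1 H2 X1 X2 [U [V [oU [oV [cov [[y [Ty Uy]] [[y' [Ty' Vy']] dis]]]]]]].
 assert (c1 : forall z, T1 z -> U z \/ V z) by (intros; apply cov; auto).
 assert (c2 : forall z, T2 z -> U z \/ V z) by (intros; apply cov; auto).
 assert (d1 : forall z, T1 z -> U z -> V z -> False) by (intros z Hz Hu Hv; exact (dis z (or_introl Hz) Hu Hv)).
 assert (d2 : forall z, T2 z -> U z -> V z -> False) by (intros z Hz Hu Hv; exact (dis z (or_intror Hz) Hu Hv)).
 destruct (c1 x X1) as [Ux|Vx].
 - destruct Ty' as [T|T].
   + exact (conn_side T1 U V x H1 oU oV c1 d1 X1 Ux y' T Vy').
   + exact (conn_side T2 U V x H2 oU oV c2 d2 X2 Ux y' T Vy').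
 - assert (c1' : forall z, T1 z -> V z \/ U z) by (intros z Hz; destruct (c1 z Hz); auto).
   assert (c2' : forall z, T2 z -> V z \/ U z) by (intros z Hz; destruct (c2 z Hz); auto).
   assert (d1' : forall z, T1 z -> V z -> U z -> False) by (intros z Hz Hv Hu; exact (d1 z Hz Hu Hv)).
   assert (d2' : forall z, T2 z -> V z -> U z -> False) by (intros z Hz Hv Hu; exact (d2 z Hz Hu Hv)).
   destruct Ty as [T|T].
   + exact (conn_side T1 V U x H1 oV oU c1' d1' X1 Vx y T Uy).
   + exact (conn_side T2 V U x H2 oV oU c2' d2' X2 Vx y T Uy).
Qed.

Lemma open_pre (U : C -> Prop) : Copen U -> Copen (fun z : C => z <> 0%R /\ U (tau z)).
Proof. intros oU z [Hz Uz]. destruct (oU (tau z) Uz) as [r [Hr K]].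
 destruct (cont_tau z Hz r Hr) as [d [Hd Kd]].
 assert (Hm : 0 < Cmod z) by (apply Cmod_gt_0; exact Hz).
 exists (Rmin d (Cmod z)). split. apply Rmin_pos; auto.
 intros w Hw. rewrite Cnorm_eq in Hw.
 assert (Hw1 : Cmod (w - z) < d) by (eapply Rlt_le_trans; [exact Hw|apply Rmin_l]).
 assert (Hw2 : Cmod (w - z) < Cmod z) by (eapply Rlt_le_trans; [exact Hw|apply Rmin_r]).
 split.
 - intro E. subst w. replace (RtoC 0 - z)%C with (- z)%C in Hw2 by ring. rewrite Cmod_opp in Hw2. lra.
 - apply K. rewrite Cnorm_eq. apply Kd. auto.
Qed.

Lemma conn_tau (T : C -> Prop) : (forall x, T x -> x <> 0%R) -> Cconnected T ->
  Cconnected (fun y => exists t, T t /\ y = tau t).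
Proof. intros H0 HT [U [V [oU [oV [cov [[y [[t [Tt Et]] Uy]] [[y' [[t' [Tt' Et']] Vy']] dis]]]]]]].
 apply HT. exists (fun z : C => z <> 0%R /\ U (tau z)), (fun z : C => z <> 0%R /\ V (tau z)).
 split; [apply open_pre; auto|]. split; [apply open_pre; auto|].
 split. { intros z Tz. destruct (cov (tau z)) as [K|K]. exists z; auto. left; split; auto. right; split; auto. }
 split. { exists t. subst. split; auto. }
 split. { exists t'. subst. split; auto. }
 intros z Tz [_ Uz] [_ Vz]. apply (dis (tau z)); auto. exists z; auto.
Qed.

Lemma cpm (a : C) : 2 < Cnorm a -> c_minus a = tau (c_plus a).
Proof. intros Ha. destruct a as [a1 a2]. unfold c_minus, c_plus, tau, Cscal, Cnorm2, Cconj, Cinv. simpl.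
 unfold Cnorm, Cnorm2 in Ha. simpl in Ha.
 set (r := a1 * a1 + a2 * a2) in *.
 assert (Hr0 : 0 <= r) by (unfold r; nra).
 assert (Hr : 4 < r). { pose proof (sqrt_sqrt r Hr0). pose proof (sqrt_pos r). nra. }
 set (q := sqrt ((r - 4) * (r - 1))).
 assert (Hq : q * q = (r - 4) * (r - 1)) by (apply sqrt_sqrt; nra).
 assert (Hq0 : 0 <= q) by apply sqrt_pos.
 set (s := (2 + r + q) / (3 * r)). set (s' := (2 + r - q) / (3 * r)).
 assert (Hs : 0 < s) by (unfold s; apply Rdiv_lt_0_compat; lra).
 assert (Hss : s' = 1 / (s * r)).
 { unfold s', s. field_simplify_eq; [nra|split; lra]. }
 assert (Hden : s * a1 * (s * a1 * 1) + - (s * a2) * (- (s * a2) * 1) = s * s * r) by (unfold r; ring).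
 assert (Hrp : r <> 0) by lra.
 f_equal; rewrite Hden, Hss; field; lra.
Qed.

Lemma hd_of f (z L : C) : has_cderiv f z L -> hd f z L.
Proof. intros H eps He. destruct (H eps He) as [d [Hd K]]. exists d; split; auto.
 intros w Hw. specialize (K w). rewrite !Cnorm_eq in K. apply K. exact Hw. Qed.

Lemma neq_close (w z c : C) : Cmod (w - z) < Cmod (z - c) -> w <> c.
Proof. intros H E. subst. rewrite Cmod_sub_sym in H. lra. Qed.

Lemma good_open (a z : C) : good a z -> exists r, 0 < r /\ forall w, Cmod (w - z) < r -> good a w.
Proof. intros [H0 [Ha HD]].
 assert (P0 : 0 < Cmod z) by (apply Cmod_gt_0; exact H0).
 assert (Pa : 0 < Cmod (z - a)). { apply Cmod_gt_0. intro E. apply Ha. replace z with ((z - a) + a)%C by ring. rewrite E. ceq; ring. }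
 assert (PD : 0 < Cmod (Dn a z)) by (apply Cmod_gt_0; exact HD).
 assert (PA : 0 <= Cmod a) by apply Cmod_ge_0.
 exists (Rmin (Cmod z) (Rmin (Cmod (z - a)) (Cmod (Dn a z) / (Cmod a + 1)))). split.
 { apply Rmin_pos; auto. apply Rmin_pos; auto. apply Rdiv_lt_0_compat; lra. }
 intros w Hw.
 assert (H1 : Cmod (w - z) < Cmod z) by (eapply Rlt_le_trans; [exact Hw|apply Rmin_l]).
 assert (H2' : Cmod (w - z) < Rmin (Cmod (z - a)) (Cmod (Dn a z) / (Cmod a + 1))) by (eapply Rlt_le_trans; [exact Hw|apply Rmin_r]).
 assert (H2 : Cmod (w - z) < Cmod (z - a)) by (eapply Rlt_le_trans; [exact H2'|apply Rmin_l]).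
 assert (H3 : Cmod (w - z) < Cmod (Dn a z) / (Cmod a + 1)) by (eapply Rlt_le_trans; [exact H2'|apply Rmin_r]).
 split; [|split].
 - apply (neq_close w z). replace (z - 0)%C with z by (ceq; ring). exact H1.
 - apply (neq_close w z a). exact H2.
 - intro E. assert (E2 : Dn a z = (Cconj a * (w - z))%C).
   { unfold Dn in *. replace (Cconj a * (w - z))%C with ((1 - Cconj a * z) - (1 - Cconj a * w))%C by ring.
     rewrite E. ceq; ring. }
   rewrite E2, Cmod_mult, Cmod_conj in H3. rewrite E2, Cmod_mult, Cmod_conj in PD.
   apply (Rmult_lt_compat_r (Cmod a + 1)) in H3; [|lra].
   unfold Rdiv in H3. rewrite Rmult_assoc, Rinv_l in H3 by lra.
   pose proof (Cmod_ge_0 (w - z)). nra.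
Qed.

Lemma iter_tau (a : C) k (w : C) : (forall j, (j < k)%nat -> good a (Nat.iter j (B a) w)) ->
  Nat.iter k (B a) (tau w) = tau (Nat.iter k (B a) w).
Proof. induction k; intros H; auto. simpl. rewrite IHk by (intros; apply H; lia).
 apply tau_B. apply H. lia. Qed.

Theorem mainTheorem16 (a z0 : Cx) (p : nat) (lam : Cx) :
  2 < Cnorm a ->
  bitransitive_attracting a z0 p lam ->
  Cim lam = 0 /\ 0 <= Cre lam.
Proof.
 intros Ha [[Hp [Hper Hex]] [Hmul [_ [Hbp [Hbm Hsep]]]]].
 pose proof (cyc_basic a z0 p Hp Hper) as Hd.
 set (Z := (fun n => Nat.iter n (B a) z0) : nat -> C).
 assert (HZp : forall n, Z (n + p)%nat = Z n).
 { intro n. unfold Z. destruct (Hd (n+p)%nat) as [E1 _]. destruct (Hd n) as [E2 _].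
   rewrite orbit_add, Hper in E1. change (Nat.iter n (Bhat a) (Some z0)) with (orbit a n z0) in E1.
   rewrite E2 in E1. injection E1; auto. }
 assert (HZq : forall q r, Z (q * p + r)%nat = Z r).
 { induction q; intro r; simpl; auto. replace (p + q * p + r)%nat with ((q * p + r) + p)%nat by lia.
   rewrite HZp. auto. }
 pose proof (hd_of _ _ _ Hmul) as Hlam.
 destruct (classic (z0 = RtoC 0)) as [H0|H0].
 { assert (E : lam = RtoC 0).
   { apply (hd_unique (Nat.iter p (B a)) z0); auto. apply cara_hd.
     destruct p as [|p']; [lia|]. rewrite H0.
     destruct (cara_iter a p' (RtoC 0)) as [L HL].
     { intros j _. rewrite iterB0. unfold Dn. replace (1 - Cconj a * 0)%C with (RtoC 1) by (ceq; ring).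
       intro E1. injection E1. lra. }
     eapply cara_val. eapply cara_ext. { intro w. symmetry. apply (Nat.iter_succ p' Cx (B a) w). }
     apply (cara_comp (Nat.iter p' (B a)) (B a)). exact HL. rewrite iterB0. apply cara_B0.
     ceq; ring. }
   rewrite E. simpl. split; lra. }
 assert (HZ0 : forall n, Z n <> 0%R).
 { intros n E. apply H0.
   assert (K : forall k, Z (k + n)%nat = RtoC 0).
   { intro k. assert (Z (k + n)%nat = Nat.iter k (B a) (Z n)) by (unfold Z; apply Nat.iter_add).
     rewrite H, E. apply iterB0. }
   specialize (HZq n 0%nat). rewrite Nat.add_0_r in HZq.
   replace (n * p)%nat with ((n * p - n) + n)%nat in HZq by nia. rewrite K in HZq. change (z0 = RtoC 0) with (Z 0%nat = RtoC 0). rewrite <- HZq. reflexivity. }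
 assert (Hn0 : nice a z0).
 { intro n. exists (Z n). split. apply Hd. apply HZ0. }
 assert (HZg : forall n, good a (Z n)) by (intro n; apply (nice_good a z0 n); auto; apply Hd).
 destruct (fin_pos (fun j m => m <= Cmod (Z j))) with p as [m [Hm Hmb]].
 { intros; lra. }
 { intros i _. exists (Cmod (Z i)). split. apply Cmod_gt_0. apply HZ0. lra. }
 assert (Hcyc : forall v, in_cycle a z0 p v -> m <= Cmod v).
 { intros v Hv. destruct (in_cycle_Z a z0 p v Hp Hper Hv) as [k [Hk ->]]. apply Hmb; auto. }
 destruct Hbp as [v [Hv [T [HTs [HTc [HTv HTp]]]]]].
 destruct Hbm as [v' [Hv' [T2 [HTs2 [HTc2 [HTv2 HTm]]]]]].
 assert (Bp : basin a z0 p (c_plus a)) by auto.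
 assert (Bm : basin a z0 p (c_minus a)) by auto.
 assert (Bm' : basin a (tau z0) p (c_minus a)).
 { rewrite cpm by auto. apply tau_basin with m; auto. }
 assert (Hot : forall n, orbit a n (tau z0) = Some (tau (Z n))).
 { intro n. apply orbit_tau; auto. apply Hd. }
 assert (Hit : forall n, Nat.iter n (B a) (tau z0) = tau (Z n)).
 { intro n. assert (orbit a n (tau z0) <> None) by (rewrite Hot; discriminate).
   destruct (orbit_some a n (tau z0) H) as [E _]. rewrite Hot in E. injection E; auto. }
 assert (Hmeet : exists i j, (i < p)%nat /\ (j < p)%nat /\ Z i = tau (Z j)).
 { apply NNPP. intro Hno.
   destruct (fin_pos (fun i mm => forall j, (j < p)%nat -> mm <= Cmod (Z i - tau (Z j)))) with p as [mm [Hmm Kmm]].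
   { intros i m1 m2 Hm12 K j Hj. specialize (K j Hj). lra. }
   { intros i Hi. apply (fin_pos (fun j mm => mm <= Cmod (Z i - tau (Z j)))). intros; lra.
     intros j Hj. exists (Cmod (Z i - tau (Z j))). split; [|lra].
     apply Cmod_gt_0. intro E. apply Hno. exists i, j. repeat split; auto.
     replace (Z i) with ((Z i - tau (Z j)) + tau (Z j))%C by ring. rewrite E. ceq; ring. }
   destruct Bm as [Hnn1 Hc1]. destruct Bm' as [_ Hc2].
   destruct (Hc1 (mm/2)) as [N1 K1]. lra. destruct (Hc2 (mm/2)) as [N2 K2]. lra.
   destruct (orbit a (N1 + N2) (c_minus a)) as [w|] eqn:Ew; [|exfalso; apply (Hnn1 (N1+N2)%nat); auto].
   destruct (K1 (N1 + N2)%nat w) as [v1 [Hv1 D1]]; [lia|auto|].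
   destruct (K2 (N1 + N2)%nat w) as [v2 [Hv2 D2]]; [lia|auto|].
   destruct (in_cycle_Z a z0 p v1 Hp Hper Hv1) as [i [Hi ->]].
   destruct Hv2 as [j [Hj Ej]]. rewrite Hot in Ej. injection Ej as <-.
   specialize (Kmm i Hi j Hj). rewrite Cnorm_eq in D1, D2.
   change (Csub w (Nat.iter i (B a) z0)) with (w - Z i)%C in D1.
   change (Csub w (tau (Z j))) with (w - tau (Z j))%C in D2.
   assert (Cmod (Z i - tau (Z j)) <= Cmod (Z i - w) + Cmod (w - tau (Z j))).
   { replace (Z i - tau (Z j))%C with ((Z i - w) + (w - tau (Z j)))%C by ring. apply Cmod_triangle. }
   rewrite (Cmod_sub_sym (Z i) w) in H. lra. }
 destruct Hmeet as [i [j [Hi [Hj Eij]]]].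
 assert (Hshift : forall n, tau (Z (n + j)%nat) = Z (n + i)%nat).
 { intro n. rewrite <- Hit. rewrite Nat.iter_add. rewrite Hit. rewrite <- Eij.
   unfold Z. symmetry. apply Nat.iter_add. }
 assert (Htz : exists k, (k < p)%nat /\ tau z0 = Z k).
 { exists ((p - j + i) mod p)%nat. split. apply Nat.mod_upper_bound; lia.
   specialize (Hshift (p - j)%nat). replace (p - j + j)%nat with (0 + p)%nat in Hshift by lia.
   rewrite HZp in Hshift. change (Z 0%nat) with (z0 : C) in Hshift. rewrite Hshift.
   rewrite <- (HZq ((p - j + i) / p)%nat ((p - j + i) mod p)%nat). f_equal.
   rewrite Nat.mul_comm. apply Nat.div_mod_eq. }
 destruct Htz as [k [Hk Hkz]].
 destruct (Nat.eq_dec k 0) as [->|Hk0].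
 { assert (Htfix : forall n, tau (Z n) = Z n) by (intro n; rewrite <- Hit, Hkz; reflexivity).
   assert (HT0 : forall x : C, T x -> x <> 0%R).
   { intros x Tx. pose proof (basin_nice a z0 p x m Hm Hcyc (HTs x Tx)) as Nx.
     destruct (Nx 0%nat) as [w [Ew Hw]]. simpl in Ew. injection Ew as <-. exact Hw. }
   exfalso. apply Hsep. exists (fun y => T y \/ (exists t, T t /\ y = tau t)). split; [|split; [|split]].
   - intros y [Ty|[t [Tt ->]]]. apply HTs; auto.
     assert (HB : basin a (tau z0) p (tau t)) by (apply tau_basin with m; auto).
     rewrite Hkz in HB. exact HB.
   - apply conn_union with v; auto. apply conn_tau; auto.
     destruct (in_cycle_Z a z0 p v Hp Hper Hv) as [k' [Hk' Ev]].
     exists v. split; auto. rewrite Ev. symmetry. apply (Htfix k').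
   - left; auto.
   - right. exists (c_plus a). split; auto. apply cpm; auto. }
 assert (HZkk : Z (k + k)%nat = z0).
 { assert (E1 : Z (k + k)%nat = Nat.iter k (B a) (Z k)) by (unfold Z; apply Nat.iter_add).
   rewrite E1, <- Hkz, Hit, <- Hkz. apply tau_tau. exact H0. }
 assert (Hpk : p = (k + k)%nat).
 { destruct (Nat.lt_total (k+k) p) as [Hl|[He|Hg]]; auto.
   - exfalso. apply (Hex (k+k)%nat). lia. destruct (Hd (k+k)%nat) as [E _]. rewrite E. f_equal. exact HZkk.
   - exfalso. apply (Hex (k + k - p)%nat). lia. destruct (Hd (k+k-p)%nat) as [E _]. rewrite E. f_equal.
     change (Z (k + k - p)%nat = z0). rewrite <- HZp. replace (k+k-p+p)%nat with (k+k)%nat by lia. exact HZkk. }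
 destruct (cara_iter a k z0) as [mu Hmu]. { intros jj _. apply Hd. }
 destruct (cara_iter a k (Z k)) as [nu Hnu].
 { intros jj _. assert (E : Nat.iter jj (B a) (Z k) = Z (jj + k)%nat) by (unfold Z; symmetry; apply Nat.iter_add).
   rewrite E. apply Hd. }
 assert (Elam : lam = (nu * mu)%C).
 { apply (hd_unique (Nat.iter p (B a)) z0); auto. apply cara_hd. rewrite Hpk.
   eapply cara_ext. { intro w. symmetry. apply Nat.iter_add. }
   apply (cara_comp (Nat.iter k (B a)) (Nat.iter k (B a))); auto. }
 set (u0 := Cconj z0).
 assert (Hu0 : u0 <> 0%R) by (apply conj_neq0; auto).
 assert (HG : cara (fun u => Nat.iter k (B a) (/ u)%C) u0 (nu * (- / (u0 * u0)))%C).
 { apply (cara_comp (fun u => / u)%C (Nat.iter k (B a))). apply cara_inv; auto.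
   change (/ u0)%C with (tau z0). rewrite Hkz. exact Hnu. }
 set (c := Cconj (Z k)).
 assert (Hc0 : c <> 0%R) by (apply conj_neq0; auto).
 assert (HH : cara (fun u => / Cconj (Nat.iter k (B a) (Cconj u)))%C u0 (- / (c * c) * Cconj mu)%C).
 { apply (cara_comp (fun u => Cconj (Nat.iter k (B a) (Cconj u))) (fun x => / x)%C).
   - apply cara_conj. unfold u0. rewrite Cconj_conj. exact Hmu.
   - cbv beta. unfold u0. rewrite Cconj_conj. apply cara_inv. exact Hc0. }
 assert (Hnb : exists r, 0 < r /\ forall w, Cmod (w - z0) < r -> forall jj, (jj < k)%nat -> good a (Nat.iter jj (B a) w)).
 { destruct (fin_pos (fun jj r => forall w, Cmod (w - z0) < r -> good a (Nat.iter jj (B a) w))) with k as [r [Hr Kr]].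
   - intros jj r1 r2 H12 K w Hw. apply K. lra.
   - intros jj Hjj. destruct (good_open a (Z jj) (HZg jj)) as [r1 [Hr1 K1]].
     destruct (cara_iter a jj z0) as [L HL]. { intros; apply Hd. }
     destruct (cara_cont _ _ _ HL r1 Hr1) as [d [Hdd Kd]].
     exists d. split. auto. intros w Hw. apply K1. apply Kd. auto.
   - exists r. split; auto. }
 destruct Hnb as [r [Hr Hnb]].
 assert (Hloc : forall u, Cmod (u - u0) < r -> Nat.iter k (B a) (/ u)%C = (/ Cconj (Nat.iter k (B a) (Cconj u)))%C).
 { intros u Hu. assert (Hw : Cmod (Cconj u - z0) < r).
   { replace z0 with (Cconj u0) by (unfold u0; apply Cconj_conj). rewrite <- Cminus_conj, Cmod_conj. auto. }
   pose proof (iter_tau a k (Cconj u) (Hnb _ Hw)) as E. unfold tau in E. rewrite Cconj_conj in E. exact E. }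
 pose proof (hd_unique _ _ _ _ (cara_hd _ _ _ HG)
   (hd_local _ _ _ _ r Hr (fun u Hu => eq_sym (Hloc u Hu)) (cara_hd _ _ _ HH))) as Eq.
 assert (Hc : c = (/ z0)%C).
 { unfold c. rewrite <- Hkz. unfold tau. rewrite Cinv_conj by (apply conj_neq0; auto). rewrite Cconj_conj. reflexivity. }
 assert (Enu : nu = (z0 * z0 * (u0 * u0) * Cconj mu)%C).
 { transitivity (nu * (- / (u0 * u0)) * (- (u0 * u0)))%C.
   - ceq. field. exact Hu0.
   - rewrite Eq, Hc. ceq. field. exact H0. }
 rewrite Elam, Enu. unfold u0. clear - H0. destruct z0 as [x y], mu as [m1 m2].
 unfold Cre, Cim, Cmult, Cconj; simpl. split. ring.
 match goal with |- 0 <= ?e => replace e with ((x*x+y*y)*(x*x+y*y)*(m1*m1+m2*m2)) by ring end.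
 apply Rmult_le_pos; [apply Rmult_le_pos|]; nra.
Qed.
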